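(* For every $\lambda\in\Lambda$, every nonzero subcomodule of $\nabla_I(\lambda)$ contains the element $\delta^{x_1}d^{y_1}\cdots\delta^{x_n}d^{y_n}$ (the highest weight vector of $\nabla_I(\lambda)$).
   Context: $k$ algebraically closed. $\mathcal{O}_{nc}(\mathrm{GL}_2)$ is the Hopf algebra generated by $a,b,c,d,\delta,\delta^{-1}$ with relations $ac=ca$, $bd=db$, $ad-cb=\delta=da-bc$, $\delta\delta^{-1}=1=\delta^{-1}\delta$, $a\delta^{-1}d-b\delta^{-1}c=1=d\delta^{-1}a-c\delta^{-1}b$, $b\delta^{-1}a=a\delta^{-1}b$, $c\delta^{-1}d=d\delta^{-1}c$, with $\Delta(a)=a\otimes a+b\otimes c$, $\Delta(b)=a\otimes b+b\otimes d$, $\Delta(c)=c\otimes a+d\otimes c$, $\Delta(d)=c\otimes b+d\otimes d$, $\Delta(\delta^{\pm1})=\delta^{\pm1}\otimes\delta^{\pm1}$. $\Lambda$: monoid generated by $d,\delta,\delta^{-1}$ with $\delta\delta^{-1}=\delta^{-1}\delta=1$, elements in reduced form $\lambda=\delta^{x_1}d^{y_1}\cdots\delta^{x_n}d^{y_n}$. $\nabla_I(\lambda)$: the span in $\mathcal{O}_{nc}(\mathrm{GL}_2)$ of $\delta^{x_1}b^{y_1'}d^{y_1''}\cdots\delta^{x_n}b^{y_n'}d^{y_n''}$ with $y_i'+y_i''=y_i$, a subcomodule of the regular left comodule $(\mathcal{O}_{nc}(\mathrm{GL}_2),\Delta)$. *)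

(* Defs.v *)
(* Concrete presentation of O_nc(GL_2) by generators and
   relations: elements of the free algebra k<a,b,c,d,del,deli> are formal
   finite linear combinations of words; O_nc(GL_2) is its quotient by the
   two-sided ideal generated by the defining relations; O ⊗ O is the quotient
   of (free ⊗ free) by I⊗F + F⊗I. *)
From HB Require Import structures.
From mathcomp Require Import all_boot all_order all_algebra.
Set Implicit Arguments. Unset Strict Implicit. Unset Printing Implicit Defensive.
Import GRing.Theory.
Local Open Scope ring_scope.

Section Onc.
Variable k : closedFieldType.

Definition gen := 'I_6.
Definition ga : gen := @Ordinal 6 0 isT.
Definition gb : gen := @Ordinal 6 1 isT.
Definition gc : gen := @Ordinal 6 2 isT.
Definition gd : gen := @Ordinal 6 3 isT.
Definition gdel : gen := @Ordinal 6 4 isT.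
Definition gdeli : gen := @Ordinal 6 5 isT.

Definition word := seq gen.

Definition fpoly := seq (k * word).
Definition coef (p : fpoly) (w : word) : k := \sum_(x <- p | x.2 == w) x.1.
Definition fscale (c : k) (p : fpoly) : fpoly := [seq (c * x.1, x.2) | x <- p].
Definition fsub (p q : fpoly) : fpoly := p ++ fscale (-1) q.
Definition fmul (p q : fpoly) : fpoly :=
  [seq (x.1 * y.1, x.2 ++ y.2) | x <- p, y <- q].
Definition fw (w : word) : fpoly := [:: (1, w)].
Definition fone : fpoly := fw [::].

Definition rels : seq fpoly :=
  [:: fsub (fw [:: ga; gc]) (fw [:: gc; ga]);
      fsub (fw [:: gb; gd]) (fw [:: gd; gb]);
      fsub (fsub (fw [:: ga; gd]) (fw [:: gc; gb])) (fw [:: gdel]);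
      fsub (fsub (fw [:: gd; ga]) (fw [:: gb; gc])) (fw [:: gdel]);
      fsub (fw [:: gdel; gdeli]) fone;
      fsub (fw [:: gdeli; gdel]) fone;
      fsub (fsub (fw [:: ga; gdeli; gd]) (fw [:: gb; gdeli; gc])) fone;
      fsub (fsub (fw [:: gd; gdeli; ga]) (fw [:: gc; gdeli; gb])) fone;
      fsub (fw [:: gb; gdeli; ga]) (fw [:: ga; gdeli; gb]);
      fsub (fw [:: gc; gdeli; gd]) (fw [:: gd; gdeli; gc])].

Inductive inI : fpoly -> Prop :=
| I_gen r u v : r \in rels -> inI (fmul u (fmul r v))
| I_add p q : inI p -> inI q -> inI (p ++ q)
| I_ext p q : (forall w, coef p w = coef q w) -> inI p -> inI q.

Definition eqO (p q : fpoly) : Prop := inI (fsub p q).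

Definition fpoly2 := seq (k * (word * word)).
Definition coef2 (P : fpoly2) (w : word * word) : k :=
  \sum_(x <- P | x.2 == w) x.1.
Definition fscale2 (c : k) (P : fpoly2) : fpoly2 := [seq (c * x.1, x.2) | x <- P].
Definition fsub2 (P Q : fpoly2) : fpoly2 := P ++ fscale2 (-1) Q.
Definition fmul2 (P Q : fpoly2) : fpoly2 :=
  [seq (x.1 * y.1, (x.2.1 ++ y.2.1, x.2.2 ++ y.2.2)) | x <- P, y <- Q].
Definition tens (p q : fpoly) : fpoly2 :=
  [seq (x.1 * y.1, (x.2, y.2)) | x <- p, y <- q].

(* the subspace I ⊗ F + F ⊗ I, kernel of F⊗F -> O ⊗ O *)
Inductive inJ : fpoly2 -> Prop :=
| J_l p q : inI p -> inJ (tens p q)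
| J_r p q : inI q -> inJ (tens p q)
| J_add P Q : inJ P -> inJ Q -> inJ (P ++ Q)
| J_ext P Q : (forall w, coef2 P w = coef2 Q w) -> inJ P -> inJ Q.

Definition t1 (u v : word) : fpoly2 := [:: (1, (u, v))].
Definition deltaGen (g : gen) : fpoly2 :=
  if g == ga then t1 [:: ga] [:: ga] ++ t1 [:: gb] [:: gc]
  else if g == gb then t1 [:: ga] [:: gb] ++ t1 [:: gb] [:: gd]
  else if g == gc then t1 [:: gc] [:: ga] ++ t1 [:: gd] [:: gc]
  else if g == gd then t1 [:: gc] [:: gb] ++ t1 [:: gd] [:: gd]
  else if g == gdel then t1 [:: gdel] [:: gdel]
  else t1 [:: gdeli] [:: gdeli].
Definition deltaWord (w : word) : fpoly2 :=
  foldr (fun g acc => fmul2 (deltaGen g) acc) (t1 [::] [::]) w.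
Definition Delta (p : fpoly) : fpoly2 :=
  flatten [seq fscale2 x.1 (deltaWord x.2) | x <- p].

(* V is a k-subspace of O_nc(GL_2) (a predicate on representatives,
   invariant under equality in O) *)
Definition subspaceO (V : fpoly -> Prop) : Prop :=
  [/\ forall p q, eqO p q -> V p -> V q,
      V [::],
      forall p q, V p -> V q -> V (p ++ q) &
      forall c p, V p -> V (fscale c p)].

(* V is a subcomodule of the regular left comodule (O, Delta):
   Delta(V) ⊆ O ⊗ V *)
Definition subcomodule (V : fpoly -> Prop) : Prop :=
  subspaceO V /\
  forall p, V p -> exists (l : seq (fpoly * fpoly)),
      (forall x, x \in l -> V x.2) /\
      inJ (fsub2 (Delta p) (flatten [seq tens x.1 x.2 | x <- l])).

(* Λ: an element in reduced form δ^{x1} d^{y1} ... δ^{xn} d^{yn}, encoded by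
   the sequence [:: (x1,y1); ...; (xn,yn)], n >= 1, x_i ≠ 0 for i >= 2,
   y_i ≠ 0 for i <= n-1. *)
Definition reducedLam (s : seq (int * nat)) : Prop :=
  (0 < size s)%N /\
  forall i, (i < size s)%N ->
    ((0 < i)%N -> (nth (0%:Z, 0%N) s i).1 != 0) /\
    ((i < (size s).-1)%N -> (nth (0%:Z, 0%N) s i).2 != 0%N).

Definition delw (x : int) : word :=
  match x with Posz m => nseq m gdel | Negz m => nseq m.+1 gdeli end.

(* the word δ^{x1} b^{y1'} d^{y1''} ... δ^{xn} b^{yn'} d^{yn''} *)
Definition nablaWord (s : seq (int * nat)) (ys' : seq nat) : word :=
  flatten [seq delw (nth (0%:Z, 0%N) s i).1
               ++ nseq (nth 0%N ys' i) gb
               ++ nseq ((nth (0%:Z, 0%N) s i).2 - nth 0%N ys' i) gd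
          | i <- iota 0 (size s)].

Definition inW (s : seq (int * nat)) (w : word) : Prop :=
  exists ys' : seq nat, size ys' = size s /\
    (forall i, (i < size s)%N -> (nth 0%N ys' i <= (nth (0%:Z, 0%N) s i).2)%N) /\
    w = nablaWord s ys'.

(* ∇_I(λ): the span of these words in O_nc(GL_2) *)
Definition inNabla (s : seq (int * nat)) (p : fpoly) : Prop :=
  exists q : fpoly, (forall x, x \in q -> inW s x.2) /\ eqO p q.

Definition hwWord (s : seq (int * nat)) : word :=
  flatten [seq delw x.1 ++ nseq x.2 gd | x <- s].

End Onc.

(* Main.v *)
Require Import Defs.
From HB Require Import structures.
From mathcomp Require Import all_boot all_order all_algebra zify.
From Stdlib Require Import Classical_Prop.
Set Implicit Arguments. Unset Strict Implicit. Unset Printing Implicit Defensive.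
Import GRing.Theory.
Local Open Scope ring_scope.

Section S.
Variable k : closedFieldType.
Implicit Types (p q : fpoly k) (w : word).

Lemma coef_cat p q w : coef (p ++ q) w = coef p w + coef q w.
Proof. by rewrite /coef big_cat. Qed.

Lemma coef_scale c p w : coef (fscale c p) w = c * coef p w.
Proof. by rewrite /coef big_map mulr_sumr. Qed.

Lemma coef_nil w : coef ([::] : fpoly k) w = 0.
Proof. by rewrite /coef big_nil. Qed.

Lemma coef_fw u w : coef (fw k u) w = (u == w)%:R.
Proof. by rewrite /coef big_cons big_nil /=; case: (u == w); rewrite ?addr0. Qed.

Lemma coef_flatten (L : seq (fpoly k)) w : coef (flatten L) w = \sum_(X <- L) coef X w.
Proof. by rewrite /coef big_flatten. Qed.

Lemma inI_nil : inI ([::] : fpoly k).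
Proof.
have := @I_gen k (head [::] (rels k)) [::] [::]. by apply; rewrite /rels inE eqxx.
Qed.

Lemma inI_zero q : (forall w, coef q w = 0) -> inI q.
Proof. move=> H; apply: (I_ext _ inI_nil) => w; by rewrite coef_nil H. Qed.

Lemma inI_coef p q : inI p -> (forall w, coef p w = coef q w) -> inI q.
Proof. by move=> Hp H; apply: I_ext Hp. Qed.

Lemma fscale_fmul c (u X : fpoly k) : fscale c (fmul u X) = fmul (fscale c u) X.
Proof.
elim: u => [//|x u IH]. rewrite /fmul /=. rewrite {1}/fscale map_cat.
rewrite -/(fmul u X) -/(fscale c (fmul u X)) IH -map_comp.
congr (_ ++ _); apply: eq_map => y /=; by rewrite mulrA.
Qed.

Lemma inI_scale c q : inI q -> inI (fscale c q).
Proof.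
elim=> [r u v Hr|p1 q1 _ H1 _ H2|p1 q1 H _ H1].
- rewrite fscale_fmul; exact: I_gen.
- rewrite /fscale map_cat; exact: I_add.
- apply: (inI_coef H1) => w; by rewrite !coef_scale H.
Qed.

Lemma inI_flatten (L : seq (fpoly k)) : (forall X, X \in L -> inI X) -> inI (flatten L).
Proof.
elim: L => [_|X L IH H] /=; first exact: inI_nil.
apply: I_add; first by apply: H; rewrite inE eqxx.
by apply: IH => Y HY; apply: H; rewrite inE HY orbT.
Qed.

Lemma coef_fsub p q w : coef (fsub p q) w = coef p w - coef q w.
Proof. by rewrite /fsub coef_cat coef_scale mulN1r. Qed.


Lemma regroup (T : eqType) (L : seq (k * T)) (g : T -> k) (U : seq T) :
  uniq U -> (forall x, x \in L -> x.2 \in U) ->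
  \sum_(x <- L) x.1 * g x.2 = \sum_(u <- U) (\sum_(x <- L | x.2 == u) x.1) * g u.
Proof.
move=> uU HU.
transitivity (\sum_(u <- U) \sum_(x <- L) (if x.2 == u then x.1 * g x.2 else 0)); last first.
  apply: eq_bigr => u _; rewrite mulr_suml [RHS]big_mkcond; apply: eq_bigr => x _ /=.
  by case: eqP => [->|].
rewrite exchange_big; apply: eq_big_seq => x Hx; rewrite -big_mkcond /= -big_filter.
have -> : [seq u <- U | x.2 == u] = [:: x.2].
  rewrite -(filter_pred1_uniq uU (HU x Hx)); apply: eq_filter => u; by rewrite /= eq_sym.
by rewrite big_seq1.
Qed.

Definition flin (f : word -> k) (q : fpoly k) : k := \sum_(x <- q) x.1 * f x.2.
Definition Phi (f : word -> k) (P : fpoly2 k) : fpoly k :=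
  [seq (x.1 * f x.2.1, x.2.2) | x <- P].

Lemma flin_coef f q U : uniq U -> (forall x, x \in q -> x.2 \in U) ->
  flin f q = \sum_(u <- U) coef q u * f u.
Proof. exact: regroup. Qed.

Lemma flin_ext f p q : (forall w, coef p w = coef q w) -> flin f p = flin f q.
Proof.
move=> H; set U := undup (map snd p ++ map snd q).
have uU : uniq U by apply: undup_uniq.
rewrite (@flin_coef f p U uU) ?(@flin_coef f q U uU); last first.
- by move=> x Hx; rewrite mem_undup mem_cat (map_f snd Hx) ?orbT.
- by move=> x Hx; rewrite mem_undup mem_cat (map_f snd Hx) ?orbT.
by apply: eq_bigr => u _; rewrite H.
Qed.

Lemma flin_cat f p q : flin f (p ++ q) = flin f p + flin f q.
Proof. by rewrite /flin big_cat. Qed.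
Lemma flin_scale f c p : flin f (fscale c p) = c * flin f p.
Proof. rewrite /flin big_map mulr_sumr; apply: eq_bigr => x _ /=; by rewrite mulrA. Qed.
Lemma flin_nil f : flin f [::] = 0.
Proof. by rewrite /flin big_nil. Qed.

Lemma coef_Phi f P o : coef (Phi f P) o = \sum_(x <- P | x.2.2 == o) x.1 * f x.2.1.
Proof. by rewrite /coef /Phi big_map. Qed.

Lemma Phi_ext f (P Q : fpoly2 k) : (forall uv, coef2 P uv = coef2 Q uv) ->
  forall o, coef (Phi f P) o = coef (Phi f Q) o.
Proof.
move=> H o; rewrite !coef_Phi.
pose G (uv : word * word) := if uv.2 == o then f uv.1 else 0.
have E R : \sum_(x <- R | x.2.2 == o) x.1 * f x.2.1 = \sum_(x <- R) x.1 * G x.2.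
  by rewrite big_mkcond; apply: eq_bigr => x _; rewrite /G; case: (x.2.2 == o); rewrite ?mulr0.
set U := undup (map snd P ++ map snd Q).
have uU : uniq U by apply: undup_uniq.
rewrite !E (@regroup _ P G U uU) ?(@regroup _ Q G U uU); last first.
- by move=> x Hx; rewrite mem_undup mem_cat (map_f snd Hx) ?orbT.
- by move=> x Hx; rewrite mem_undup mem_cat (map_f snd Hx) ?orbT.
by apply: eq_bigr => u _; move: (H u); rewrite /coef2 => ->.
Qed.

Lemma coef_Phi_tens f p q o : coef (Phi f (tens p q)) o = flin f p * coef q o.
Proof.
rewrite coef_Phi /tens big_mkcond big_allpairs_dep /flin mulr_suml.
apply: eq_bigr => x _; rewrite /coef mulr_sumr [RHS]big_mkcond; apply: eq_bigr => y _ /=.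
by case: (y.2 == o); rewrite ?mulr0 // mulrAC.
Qed.

Lemma Phi_cat f P Q : Phi f (P ++ Q) = Phi f P ++ Phi f Q.
Proof. by rewrite /Phi map_cat. Qed.

Lemma Phi_scale f c P : Phi f (fscale2 c P) = fscale c (Phi f P).
Proof. rewrite /Phi /fscale2 /fscale -!map_comp; apply: eq_map => x /=; by rewrite mulrA. Qed.

Lemma Phi_flatten f (L : seq (fpoly2 k)) : Phi f (flatten L) = flatten (map (Phi f) L).
Proof. by rewrite /Phi map_flatten. Qed.

Lemma J_lemma P : inJ P -> exists Ls : seq (fpoly k), (forall q, q \in Ls -> inI q) /\
  forall f, (forall q, q \in Ls -> flin f q = 0) -> inI (Phi f P).
Proof.
elim=> [p q Hp|p q Hq|P1 Q1 _ [L1 [H1 H1']] _ [L2 [H2 H2']]|P1 Q1 HPQ _ [L1 [H1 H1']]].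
- exists [:: p]; split; first by move=> q'; rewrite inE => /eqP ->.
  move=> f Hf; apply: inI_zero => o; rewrite coef_Phi_tens Hf ?mul0r //; by rewrite inE.
- exists [::]; split=> // f _; apply: (inI_coef (inI_scale (flin f p) Hq)) => o.
  by rewrite coef_Phi_tens coef_scale.
- exists (L1 ++ L2); split.
    by move=> q; rewrite mem_cat => /orP[]; [apply: H1|apply: H2].
  move=> f Hf; rewrite Phi_cat; apply: I_add; [apply: H1'|apply: H2'] => q Hq;
  by apply: Hf; rewrite mem_cat Hq ?orbT.
- exists L1; split=> // f Hf; apply: (inI_coef (H1' f Hf)); exact: Phi_ext.
Qed.


Definition dg (g : gen) : int :=
  if (val g == 0%N) || (val g == 2%N) || (val g == 4%N) then 1
  else if val g == 5%N then -1 else 0.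
Definition deg (w : word) : int := foldr (fun g acc => dg g + acc) 0 w.

Lemma deg_cat u v : deg (u ++ v) = deg u + deg v.
Proof. elim: u => [|g u IH] /=; by rewrite ?add0r // IH addrA. Qed.

Definition proj (D : int) (q : fpoly k) : fpoly k := [seq x <- q | deg x.2 == D].

Lemma coef_proj D q w : coef (proj D q) w = if deg w == D then coef q w else 0.
Proof.
rewrite /coef /proj big_filter_cond; case: eqP => Hw.
  apply: eq_bigl => x; case: (x.2 =P w) => [->|]; by rewrite ?Hw ?eqxx ?andbF.
apply: big_pred0 => x; case: (x.2 =P w) => [->|]; last by rewrite andbF.
by rewrite andbT; apply/negbTE/eqP.
Qed.

Lemma rels_homog_b :
  all (fun r => all (fun x => deg x.2 == deg (head (0, [::]) r).2) r) (rels k).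
Proof. by []. Qed.


Lemma rels_homog r x : r \in rels k -> x \in r -> deg x.2 = deg (head (0, [::]) r).2.
Proof.
move=> Hr Hx; have /allP/(_ r Hr)/allP/(_ x Hx)/eqP := rels_homog_b; done.
Qed.

Lemma coef_fmul3 (u r v : fpoly k) w :
  coef (fmul u (fmul r v)) w = \sum_(x <- u) \sum_(z <- r) \sum_(y <- v)
     (if x.2 ++ (z.2 ++ y.2) == w then x.1 * (z.1 * y.1) else 0).
Proof.
rewrite /coef big_mkcond /fmul big_allpairs_dep; apply: eq_bigr => x _.
by rewrite big_allpairs_dep.
Qed.

Lemma inI_proj q : inI q -> forall D, inI (proj D q).
Proof.
elim=> [r u v Hr|p1 q1 _ H1 _ H2|p1 q1 H _ H1] D.
- set e := deg (head (0, [::]) r).2.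
  apply: (@inI_coef (flatten [seq fmul [:: x] (fmul r (proj (D - deg x.2 - e) v)) | x <- u])).
    by apply: inI_flatten => X /mapP [x _ ->]; apply: I_gen.
  move=> w; rewrite coef_flatten big_map coef_proj coef_fmul3.
  have E x : coef (fmul [:: x] (fmul r (proj (D - deg x.2 - e) v))) w =
     \sum_(z <- r) \sum_(y <- v) (if deg y.2 == D - deg x.2 - e then
        (if x.2 ++ (z.2 ++ y.2) == w then x.1 * (z.1 * y.1) else 0) else 0).
    rewrite coef_fmul3 big_seq1; apply: eq_bigr => z _; by rewrite big_filter big_mkcond.
  under eq_bigr => x _ do rewrite E.
  case: eqP => Hw.
    apply: eq_bigr => x _; rewrite big_seq [RHS]big_seq; apply: eq_bigr => z Hz.
    apply: eq_bigr => y _; case: (x.2 ++ (z.2 ++ y.2) =P w) => [Hxw|]; last by case: ifP.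
    have := rels_homog Hr Hz; rewrite -/e => Hz'.
    have -> : deg y.2 == D - deg x.2 - e; last by [].
    apply/eqP; move: Hw; rewrite -Hxw !deg_cat; lia.
  rewrite big1 // => x _; rewrite big_seq big1 // => z Hz; rewrite big1 // => y _.
  have := rels_homog Hr Hz; rewrite -/e => Hz'.
  case: (deg y.2 =P _) => // Hy; case: (_ =P w) => // Hxw; exfalso; apply: Hw.
  rewrite -Hxw !deg_cat; move: Hz' Hy; clearbody e; lia.
- rewrite /proj filter_cat; apply: I_add; [exact: H1|exact: H2].
- apply: (inI_coef (H1 D)) => w; by rewrite !coef_proj H.
Qed.


Inductive inSp (Ms : seq (fpoly k)) : fpoly k -> Prop :=
| sp0 : inSp Ms [::]
| spm m c q : m \in Ms -> inSp Ms q -> inSp Ms (fscale c m ++ q)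
| spext p q : (forall w, coef p w = coef q w) -> inSp Ms p -> inSp Ms q.

Lemma inSp_I Ms q : (forall m, m \in Ms -> inI m) -> inSp Ms q -> inI q.
Proof.
move=> HM; elim=> [|m c q' Hm _ IH|p q' H _ IH]; first exact: inI_nil.
- apply: I_add => //; apply: inI_scale; exact: HM.
- exact: inI_coef IH H.
Qed.

Lemma inSp_flin f Ms q : (forall m, m \in Ms -> flin f m = 0) -> inSp Ms q -> flin f q = 0.
Proof.
move=> HM; elim=> [|m c q' Hm _ IH|p q' H _ IH]; first exact: flin_nil.
- by rewrite flin_cat flin_scale HM // IH mulr0 addr0.
- by rewrite -(flin_ext f H).
Qed.

Lemma inSp_mono m Ms q : inSp Ms q -> inSp (m :: Ms) q.
Proof.
elim=> [|m' c q' Hm _ IH|p q' H _ IH]; first exact: sp0.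
- by apply: spm => //; rewrite inE Hm orbT.
- exact: spext IH.
Qed.

Lemma flin_lin (g h : word -> k) c q :
  flin (fun u => g u - c * h u) q = flin g q - c * flin h q.
Proof.
rewrite /flin mulr_sumr -sumrB; apply: eq_bigr => x _; by rewrite mulrBr mulrCA.
Qed.

Lemma functional (P : pred word) (Ms : seq (fpoly k)) (q0 : fpoly k) :
  (forall X, X \in q0 :: Ms -> forall x, x \in X -> P x.2) -> ~ inSp Ms q0 ->
  exists f : word -> k, (forall u, ~~ P u -> f u = 0) /\
    (forall m, m \in Ms -> flin f m = 0) /\ flin f q0 = 1.
Proof.
elim: Ms q0 => [|m Ms IH] q0 HP HS.
  case: (boolP (has (fun x => coef q0 x.2 != 0) q0)) => [/hasP [x Hx Hc]|Hn]; last first.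
    exfalso; apply: HS; apply: (spext _ (sp0 _)) => w; rewrite coef_nil.
    case: (boolP (has (fun x => x.2 == w) q0)) => [/hasP [x Hx /eqP <-]|Hw].
      by move/hasPn: Hn => /(_ x Hx); rewrite negbK => /eqP ->.
    rewrite /coef big1_seq // => x /andP [Hxw Hx]; by move/hasPn: Hw => /(_ x Hx); rewrite Hxw.
  set w := x.2; set c := coef q0 w.
  exists (fun u => if u == w then c^-1 else 0); split; [|split] => //.
    move=> u Hu; case: eqP => // Euw; move: Hu; rewrite Euw.
    by rewrite (HP q0 _ x Hx) // inE eqxx.
  rewrite /flin.
  transitivity (\sum_(y <- q0 | y.2 == w) y.1 * c^-1).
    by rewrite [RHS]big_mkcond; apply: eq_bigr => y _; case: (y.2 == w); rewrite ?mulr0.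
  by rewrite -mulr_suml -/(coef q0 w) -/c divff.
have HPm : forall X, X \in m :: Ms -> forall x, x \in X -> P x.2.
  by move=> X HX; apply: HP; rewrite inE HX orbT.
have HPs : forall X, X \in Ms -> forall x, x \in X -> P x.2.
  by move=> X HX; apply: HPm; rewrite inE HX orbT.
case: (classic (inSp Ms m)) => Hm.
  have A1 : forall X, X \in q0 :: Ms -> forall x, x \in X -> P x.2.
    move=> X; rewrite inE => /orP [/eqP ->|HX]; first by apply: HP; rewrite inE eqxx.
    by apply: HPs.
  have A2 : ~ inSp Ms q0 by move=> H; apply: HS; apply: inSp_mono.
  have [g [Hg1 [Hg2 Hg3]]] := IH q0 A1 A2.
  exists g; split=> //; split=> // m'; rewrite inE => /orP [/eqP ->|]; last exact: Hg2.
  exact: inSp_flin Hm.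
have B1 : forall X, X \in m :: Ms -> forall x, x \in X -> P x.2.
  move=> X; rewrite inE => /orP [/eqP ->|HX]; by [apply: HPm; rewrite inE eqxx|exact: HPs].
have [h [Hh1 [Hh2 Hh3]]] := IH m B1 Hm.
set q1 := q0 ++ fscale (- flin h q0) m.
have C1 : forall X, X \in q1 :: Ms -> forall x, x \in X -> P x.2.
  move=> X; rewrite inE => /orP [/eqP ->|HX]; last exact: HPs.
  move=> x; rewrite mem_cat => /orP [Hx|/mapP [y Hy ->]]; first by apply: (HP q0 _ x Hx); rewrite inE eqxx.
  by apply: (HPm m _ y Hy); rewrite inE eqxx.
have C2 : ~ inSp Ms q1.
  move=> H1; apply: HS; apply: (spext (p := fscale (flin h q0) m ++ q1)).
    by move=> w; rewrite !coef_cat !coef_scale mulNr addrCA subrr addr0.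
  by apply: spm; [rewrite inE eqxx|apply: inSp_mono].
have [g [Hg1 [Hg2 Hg3]]] := IH q1 C1 C2.
exists (fun u => g u - flin g m * h u); split; [|split].
- by move=> u Hu; rewrite Hg1 // Hh1 // mulr0 subrr.
- move=> m'; rewrite inE flin_lin => /orP [/eqP ->|Hm']; first by rewrite Hh3 mulr1 subrr.
  by rewrite Hg2 // Hh2 // mulr0 subrr.
- rewrite flin_lin -Hg3 /q1 flin_cat flin_scale; by rewrite mulNr mulrC.
Qed.


Definition notac (w : word) := all (fun g => (g != ga) && (g != gc)) w.
Definition dify (w : word) : word := map (fun g => if g == gb then gd else g) w.

Lemma gen_cases g : (g != ga) && (g != gc) -> [\/ g = gb, g = gd, g = gdel | g = gdeli].
Proof.
case: g => [[|[|[|[|[|[|n]]]]]] Hn] //= _.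
- by constructor 1; apply: val_inj.
- by constructor 2; apply: val_inj.
- by constructor 3; apply: val_inj.
- by constructor 4; apply: val_inj.
Qed.

Lemma dGb : deltaGen k gb = [:: (1, ([:: ga], [:: gb])); (1, ([:: gb], [:: gd]))].
Proof. by []. Qed.
Lemma dGd : deltaGen k gd = [:: (1, ([:: gc], [:: gb])); (1, ([:: gd], [:: gd]))].
Proof. by []. Qed.
Lemma dGdel : deltaGen k gdel = [:: (1, ([:: gdel], [:: gdel]))].
Proof. by []. Qed.
Lemma dGdeli : deltaGen k gdeli = [:: (1, ([:: gdeli], [:: gdeli]))].
Proof. by []. Qed.

Lemma dW_cons g w : deltaWord k (g :: w) = fmul2 (deltaGen k g) (deltaWord k w).
Proof. by []. Qed.

Lemma dga : dg ga = 1. Proof. by []. Qed.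
Lemma dgb : dg gb = 0. Proof. by []. Qed.
Lemma dgc : dg gc = 1. Proof. by []. Qed.
Lemma dgd : dg gd = 0. Proof. by []. Qed.
Lemma dgdel : dg gdel = 1. Proof. by []. Qed.
Lemma dgdeli : dg gdeli = -1. Proof. by []. Qed.

Lemma dW_deg w : notac w -> forall x, x \in deltaWord k w ->
  deg x.2.1 = deg w + (count_mem gb x.2.2)%:Z.
Proof.
elim: w => [_ x|g w IH /andP [Hg Hw] x]; first by rewrite inE => /eqP ->.
rewrite dW_cons => /allpairsP [[x1 y1] [/= Hx1 Hy1 ->]] /=.
have := IH Hw _ Hy1 => {}IH.
case/gen_cases: Hg Hx1 => ->; rewrite ?dGb ?dGd ?dGdel ?dGdeli !inE;
  try case/orP; move/eqP => -> /=; rewrite IH ?dga ?dgb ?dgc ?dgd ?dgdel ?dgdeli; move: (count_mem gb y1.2.2) (deg w) => n d; lia.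
Qed.

Lemma dW_filter w : notac w ->
  [seq x <- deltaWord k w | count_mem gb x.2.2 == 0%N] = [:: (1, (w, dify w))].
Proof.
elim: w => [//|g w IH /andP [Hg Hw]].
rewrite dW_cons; have {}IH := IH Hw.
case/gen_cases: Hg => ->; rewrite ?dGb ?dGd ?dGdel ?dGdeli /fmul2 /= !filter_cat !filter_map.
- rewrite (eq_filter (a2 := pred0)) ?filter_pred0 //=.
  rewrite (eq_filter (a2 := fun x => count_mem gb x.2.2 == 0%N)) // IH /=.
  by rewrite mulr1.
- rewrite (eq_filter (a2 := pred0)) ?filter_pred0 //=.
  rewrite (eq_filter (a2 := fun x => count_mem gb x.2.2 == 0%N)) // IH /=.
  by rewrite mulr1.
- rewrite (eq_filter (a2 := fun x => count_mem gb x.2.2 == 0%N)) // IH /=.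
  by rewrite mulr1.
- rewrite (eq_filter (a2 := fun x => count_mem gb x.2.2 == 0%N)) // IH /=.
  by rewrite mulr1.
Qed.


Lemma coef_Phi_dW f w o : notac w -> (forall u, deg u != deg w -> f u = 0) ->
  coef (Phi f (deltaWord k w)) o = (dify w == o)%:R * f w.
Proof.
move=> Hw Hf; rewrite coef_Phi.
transitivity (\sum_(x <- deltaWord k w | (count_mem gb x.2.2 == 0%N) && (x.2.2 == o))
   x.1 * f x.2.1).
  rewrite big_mkcond [RHS]big_mkcond; apply: eq_big_seq => x Hx /=.
  case: (boolP (count_mem gb x.2.2 == 0%N)) => Hc //=.
  case: (x.2.2 == o) => //; rewrite Hf ?mulr0 // (dW_deg Hw Hx).
  move: Hc; move: (count_mem gb x.2.2) (deg w) => n d Hn; apply/eqP; lia.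
rewrite -big_filter_cond dW_filter // big_cons big_nil /=.
by case: (dify w == o); rewrite ?mul1r ?addr0 ?mul0r.
Qed.

Lemma coef_Phi_Delta f (q : fpoly k) o :
  coef (Phi f (Delta q)) o = \sum_(x <- q) x.1 * coef (Phi f (deltaWord k x.2)) o.
Proof.
rewrite /Delta Phi_flatten coef_flatten -map_comp big_map; apply: eq_bigr => x _ /=.
by rewrite Phi_scale coef_scale.
Qed.


Lemma notac_nabla s ys : notac (nablaWord s ys).
Proof.
apply/allP => g /flattenP [X /mapP [i _ ->]]; rewrite !mem_cat => /orP [|/orP []].
- by case: (nth _ s i).1 => m; rewrite mem_nseq => /andP [_ /eqP ->].
- by rewrite mem_nseq => /andP [_ /eqP ->].
- by rewrite mem_nseq => /andP [_ /eqP ->].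
Qed.

Lemma dify_delw x : dify (delw x) = delw x.
Proof. by case: x => m; rewrite /dify map_nseq. Qed.

Lemma dify_nabla s ys : (forall i, (i < size s)%N -> (nth 0%N ys i <= (nth (0%:Z, 0%N) s i).2)%N) ->
  dify (nablaWord s ys) = hwWord s.
Proof.
move=> Hb; rewrite /dify /nablaWord map_flatten -map_comp /hwWord.
have -> : [seq delw x.1 ++ nseq x.2 gd | x <- s] = [seq delw (nth (0%:Z,0%N) s i).1 ++
   nseq (nth (0%:Z,0%N) s i).2 gd | i <- iota 0 (size s)].
  by rewrite -{1}(mkseq_nth (0%:Z,0%N) s) /mkseq -map_comp.
congr flatten.
apply/eq_in_map => i; rewrite mem_iota add0n => /andP [_ Hi] /=.
rewrite !map_cat -/(dify _) dify_delw !map_nseq /= -nseqD subnKC //; exact: Hb.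
Qed.

Lemma deg_dify w : deg (dify w) = deg w.
Proof.
elim: w => [//|g w IH] /=; rewrite -/(dify w) IH; case: eqP => [->|] //.
Qed.

Lemma flin_proj f D L : (forall u, ~~ (deg u == D) -> f u = 0) -> flin f (proj D L) = flin f L.
Proof.
move=> Hf; rewrite /flin /proj big_filter [LHS]big_mkcond; apply: eq_bigr => x _.
by case: ifP => // /negbT H; rewrite Hf // mulr0.
Qed.

End S.

Theorem mainTheorem10 (k : closedFieldType) (s : seq (int * nat))
  (V : fpoly k -> Prop) :
  reducedLam s ->
  subcomodule V ->
  (forall p, V p -> inNabla s p) ->
  (exists p, V p /\ ~ eqO p [::]) ->
  V (fw k (hwWord s)).
Proof.
move=> _ [[Vext V0 Vcat Vscale] Vcom] Hnab [p [Vp Hp]].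
have [q [Hq Epq]] := Hnab p Vp.
have Vq : V q := Vext p q Epq Vp.
have nIq : ~ inI q.
  move=> HIq; apply: Hp; apply: (inI_coef (I_add Epq HIq)) => w.
  by rewrite coef_cat !coef_fsub coef_nil subr0 subrK.
have [l [Hl HJ]] := Vcom q Vq.
have [Ls [HLs HLsf]] := J_lemma HJ.
set D := deg (hwWord s).
have Hqw : forall x, x \in q -> [/\ notac x.2, dify x.2 = hwWord s & deg x.2 = D].
  move=> x /Hq [ys [_ [Hb ->]]]; split; first exact: notac_nabla.
    exact: dify_nabla.
  by rewrite /D -(dify_nabla Hb) deg_dify.
have F1 : forall X, X \in q :: map (proj D) Ls -> forall x, x \in X -> (fun u => deg u == D) x.2.
  move=> X; rewrite inE => /orP [/eqP ->|/mapP [L _ ->]] x.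
    by move=> Hx; have [_ _ ->] := Hqw x Hx.
  by rewrite mem_filter => /andP [].
have F2 : ~ inSp (map (proj D) Ls) q.
  move=> HS; apply: nIq; apply: (inSp_I _ HS) => m /mapP [L HL ->].
  exact: inI_proj (HLs L HL) D.
have [f [Hsupp [Hkill Hone]]] := @functional k (fun u => deg u == D) (map (proj D) Ls) q F1 F2.
have Hkill' : forall L, L \in Ls -> flin f L = 0.
  by move=> L HL; rewrite -(flin_proj _ Hsupp) Hkill // map_f.
have HI := HLsf f Hkill'.
set Comb := flatten [seq fscale (flin f x.1) x.2 | x <- l].
have VComb : V Comb.
  rewrite /Comb; clear -Hl V0 Vcat Vscale; elim: l Hl => [_|x l IH Hl] /=; first exact: V0.
  apply: Vcat; first by apply: Vscale; apply: Hl; rewrite inE eqxx.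
  by apply: IH => y Hy; apply: Hl; rewrite inE Hy orbT.
have Ecoef : forall o, coef (Phi f (fsub2 (Delta q) (flatten [seq tens x.1 x.2 | x <- l]))) o
    = (hwWord s == o)%:R - coef Comb o.
  move=> o; rewrite /fsub2 Phi_cat Phi_scale coef_cat coef_scale mulN1r.
  congr (_ - _).
    rewrite coef_Phi_Delta.
    transitivity (\sum_(x <- q) x.1 * ((hwWord s == o)%:R * f x.2)).
      rewrite big_seq [RHS]big_seq; apply: eq_bigr => x Hx.
      have [Ha Hd Hdeg] := Hqw x Hx.
      rewrite coef_Phi_dW // ?Hd // => u Hu; apply: Hsupp; by rewrite -Hdeg.
    rewrite -[RHS]mulr1 -Hone /flin mulr_sumr; apply: eq_bigr => x _; by rewrite mulrCA.
  rewrite Phi_flatten coef_flatten -map_comp big_map /Comb coef_flatten big_map.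
  apply: eq_bigr => x _ /=; by rewrite coef_Phi_tens coef_scale.
have HE : eqO Comb (fw k (hwWord s)).
  apply: (inI_coef (inI_scale (-1) HI)) => o.
  by rewrite coef_scale Ecoef coef_fsub coef_fw mulN1r opprB.
exact: Vext HE VComb.
Qed.
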